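(* Consider $\min_{\beta\in\mathbb{R}^p} f(\beta)+\sum_{j=1}^p g_j(\beta_j)$ under the following hypotheses: $f$ is convex, differentiable, with $|\nabla_j f(x+he_j)-\nabla_j f(x)|\le L_j|h|$ ($L_j>0$); each $g_j$ is proper, closed, lower bounded and $g_j/L_j+\frac{\alpha}{2}(\cdot)^2$ is convex for some $\alpha<1$; cyclic proximal coordinate descent converges to a critical point $\hat\beta$; with $\mathcal{S}=\mathrm{gsupp}(\hat\beta)=\{j_1,\dots,j_{|\mathcal{S}|}\}$, $-\nabla_j f(\hat\beta)\in\mathrm{interior}(\partial g_j(\hat\beta_j))$ for $j\notin\mathcal{S}$, $f$ is $\mathcal{C}^3$ near $\hat\beta$, $g_j$ is $\mathcal{C}^3$ near $\hat\beta_j$ for $j\in\mathcal{S}$, and $M:=\nabla^2_{\mathcal{S},\mathcal{S}}f(\hat\beta)+\nabla^2_{\mathcal{S},\mathcal{S}}g(\hat\beta)\succ0$. Let $\gamma_j=1/L_j$ and, for $s\in[|\mathcal{S}|]$, $B^{(s)}=M^{1/2}_{:s}\,\frac{\gamma_{j_s}}{1+\gamma_{j_s}g_{j_s}''(\hat\beta_{j_s})}\,(M^{1/2}_{:s})^\top$, where $M^{1/2}_{:s}$ is the $s$-th column of $M^{1/2}$. Then for all $s\in[|\mathcal{S}|]$, $\|B^{(s)}\|_2\le1$.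
   Context: $\partial$ is the Fréchet subdifferential, critical point means $-\nabla f(x)\in\partial g(x)$ with $g(\beta)=\sum_jg_j(\beta_j)$, and $\mathrm{gsupp}(\beta)=\{j:\partial g_j(\beta_j)\text{ is a singleton}\}$. $\nabla^2_{\mathcal{S},\mathcal{S}}g(\hat\beta)=\mathrm{diag}(g_j''(\hat\beta_j))_{j\in\mathcal{S}}$. Cyclic proximal coordinate descent updates, for $j=1,\dots,p$ in turn, $\beta_j\leftarrow\mathrm{prox}_{g_j/L_j}(\beta_j-\nabla_jf(\beta)/L_j)$, with $\mathrm{prox}_h(z)=\arg\min_u\frac12(u-z)^2+h(u)$. *)

(* Defs.v *)
From HB Require Import structures.
From mathcomp Require Import all_boot all_order all_algebra.
From mathcomp Require Import all_classical all_reals all_analysis.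
Set Implicit Arguments. Unset Strict Implicit. Unset Printing Implicit Defensive.
Import Order.TTheory GRing.Theory Num.Theory.
Import numFieldNormedType.Exports.
Local Open Scope classical_set_scope.
Local Open Scope ring_scope.

Definition ecoord {R : realType} {p : nat} (j : 'I_p) : 'rV[R]_p := delta_mx 0 j.

Definition pderiv {R : realType} {p : nat} (j : 'I_p) (f : 'rV[R]_p -> R)
  : 'rV[R]_p -> R := fun x => 'D_(ecoord j) f x.

Definition convex_fun {R : realType} {p : nat} (f : 'rV[R]_p -> R) : Prop :=
  forall x y (t : R), (0 <= t <= 1)%R ->
    f (t *: x + (1 - t) *: y) <= t * f x + (1 - t) * f y.

Definition econvex1 {R : realType} (h : R -> \bar R) : Prop :=
  forall x y (t : R), (0 < t < 1)%R ->
    (h (t * x + (1 - t) * y)%R <= t%:E * h x + (1 - t)%:E * h y)%E.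

Definition proper_fun {R : realType} (h : R -> \bar R) : Prop :=
  (forall x, h x != -oo%E) /\ exists x, h x \is a fin_num.

Definition lower_bounded {R : realType} (h : R -> \bar R) : Prop :=
  exists m : R, forall x, (m%:E <= h x)%E.

(* Frechet (regular) subdifferential of h : R -> \bar R at x. *)
Definition fsubdiff {R : realType} (h : R -> \bar R) (x : R) : set R :=
  [set v | h x \is a fin_num /\
     forall eps : R, 0 < eps -> exists2 d : R, 0 < d &
       forall y, `|y - x| < d ->
         (h x + (v * (y - x) - eps * `|y - x|)%:E <= h y)%E].

Definition is_singleton {T} (A : set T) : Prop := exists v, A = [set v].

Definition gsupp {R : realType} {p : nat} (g : 'I_p -> R -> \bar R)
  (beta : 'rV[R]_p) : {set 'I_p} :=
  [set j | `[< is_singleton (fsubdiff (g j) (beta 0 j)) >]].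

Definition set_coord {R : realType} {p : nat} (z : 'rV[R]_p) (j : 'I_p) (u : R)
  : 'rV[R]_p := \row_i (if i == j then u else z 0 i).

Definition is_prox {R : realType} (h : R -> \bar R) (z u : R) : Prop :=
  forall w, (((u - z) ^+ 2 / 2)%:E + h u <= ((w - z) ^+ 2 / 2)%:E + h w)%E.

(* beta is a run of cyclic proximal coordinate descent: beta (k*p + j) is the
   iterate before the j-th update of the k-th sweep. *)
Definition pcd_run {R : realType} {p : nat} (f : 'rV[R]_p -> R)
  (g : 'I_p -> R -> \bar R) (L : 'I_p -> R) (beta : nat -> 'rV[R]_p) : Prop :=
  forall (k : nat) (j : 'I_p),
    let z := beta (k * p + j)%N in
    exists2 u : R,
      is_prox (fun v => ((L j)^-1%:E * g j v)%E) (z 0 j - pderiv j f z / L j) u &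
      beta (k * p + j).+1 = set_coord z j u.

Definition C3_near {R : realType} {p : nat} (f : 'rV[R]_p -> R) (x : 'rV[R]_p)
  : Prop :=
  exists2 U : set 'rV[R]_p, open U /\ U x &
    forall y, U y -> forall i j k : 'I_p,
      [/\ {for y, continuous f},
          derivable f y (ecoord i) /\ {for y, continuous (pderiv i f)},
          derivable (pderiv i f) y (ecoord j) /\
            {for y, continuous (pderiv j (pderiv i f))} &
          derivable (pderiv j (pderiv i f)) y (ecoord k) /\
            {for y, continuous (pderiv k (pderiv j (pderiv i f)))}].

Definition C3_near1 {R : realType} (h : R -> \bar R) (x : R) : Prop :=
  exists2 U : set R, open U /\ U x &
    forall y, U y -> h y \is a fin_num /\
      forall n : nat, (n <= 3)%N ->
        {for y, continuous (derive1n n (fine \o h))} /\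
        ((n < 3)%N -> derivable (derive1n n (fine \o h)) y 1).

Definition d2 {R : realType} (h : R -> \bar R) (x : R) : R :=
  derive1n 2 (fine \o h) x.

Definition hess {R : realType} {p : nat} (f : 'rV[R]_p -> R) (x : 'rV[R]_p)
  (i k : 'I_p) : R := pderiv k (pderiv i f) x.

(* M = nabla^2_{S,S} f(beta) + diag(g_j''(beta_j))_{j in S}, with S enumerated
   as j_1 < ... < j_|S| (j_s = enum_val s). *)
Definition Mmat {R : realType} {p : nat} (f : 'rV[R]_p -> R)
  (g : 'I_p -> R -> \bar R) (S : {set 'I_p}) (beta : 'rV[R]_p) : 'M[R]_#|S| :=
  \matrix_(s, t) (hess f beta (enum_val s) (enum_val t)
                  + (s == t)%:R * d2 (g (enum_val s)) (beta 0 (enum_val s))).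

Definition posdef {R : realType} {n : nat} (M : 'M[R]_n) : Prop :=
  M^T = M /\ forall v : 'cV[R]_n, v != 0 -> 0 < (v^T *m M *m v) 0 0.

Definition psd {R : realType} {n : nat} (M : 'M[R]_n) : Prop :=
  M^T = M /\ forall v : 'cV[R]_n, 0 <= (v^T *m M *m v) 0 0.

Definition is_sqrtm {R : realType} {n : nat} (Q M : 'M[R]_n) : Prop :=
  psd Q /\ Q *m Q = M.

Definition enorm {R : realType} {n : nat} (v : 'cV[R]_n) : R :=
  Num.sqrt (\sum_i v i 0 ^+ 2).

Definition opnorm2 {R : realType} {m n : nat} (B : 'M[R]_(m, n)) : R :=
  sup [set enorm (B *m v) | v in [set v : 'cV[R]_n | enorm v <= 1]].

Definition Bmat {R : realType} {p : nat} (g : 'I_p -> R -> \bar R)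
  (L : 'I_p -> R) (S : {set 'I_p}) (beta : 'rV[R]_p) (Q : 'M[R]_#|S|)
  (s : 'I_#|S|) : 'M[R]_#|S| :=
  let j := enum_val s in
  let gam := (L j)^-1 in
  (gam / (1 + gam * d2 (g j) (beta 0 j))) *: (col s Q *m (col s Q)^T).

(* Main.v *)
Require Import Defs.
From HB Require Import structures.
From mathcomp Require Import all_boot all_order all_algebra.
From mathcomp Require Import all_classical all_reals all_analysis.
From mathcomp Require Import ring lra.
Import Order.TTheory GRing.Theory Num.Theory.
Import numFieldNormedType.Exports.
Local Open Scope classical_set_scope.
Local Open Scope ring_scope.

Lemma cs_aux (R : realType) n (q v : 'cV[R]_n) :
  (\sum_i q i 0 * v i 0) ^+ 2 * (\sum_i q i 0 ^+ 2) <= (\sum_i q i 0 ^+ 2) ^+ 2 * (\sum_i v i 0 ^+ 2).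
Proof.
set P := \sum_i q i 0 * v i 0; set N := \sum_i q i 0 ^+ 2; set V := \sum_i v i 0 ^+ 2.
have H : 0 <= \sum_i (P * q i 0 - N * v i 0) ^+ 2 by apply: sumr_ge0 => i _; exact: sqr_ge0.
have E : \sum_i (P * q i 0 - N * v i 0) ^+ 2 =
   P ^+ 2 * N - (2 * P * N) * P + N ^+ 2 * V.
  rewrite (eq_bigr (fun i => P ^+ 2 * q i 0 ^+ 2 - (2 * P * N) * (q i 0 * v i 0) + N ^+ 2 * v i 0 ^+ 2)); last by move=> i _; ring.
  by rewrite !big_split /= sumrN -!mulr_sumr -/P -/N -/V.
rewrite E in H. lra.
Qed.

Lemma Bv (R : realType) n (q v : 'cV[R]_n) (c : R) :
  (c *: (q *m q^T)) *m v = (c * \sum_i q i 0 * v i 0) *: q.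
Proof.
apply/matrixP => i j; rewrite -scalemxAl -mulmxA !mxE big_ord1 !mxE.
rewrite (ord1 j); under eq_bigr do rewrite !mxE. ring.
Qed.

Lemma hess_le (R : realType) p (F : 'rV[R]_p -> R) x j (Lj : R) :
  derivable F x (ecoord j) ->
  (forall h : R, `|F (x + h *: ecoord j) - F x| <= Lj * `|h|) ->
  'D_(ecoord j) F x <= Lj.
Proof.
move=> dF HF; rewrite /derive; apply: limr_le => //.
near=> h.
have h0 : h != 0 by near: h; exact: nbhs_dnbhs_neq.
have -> : (F \o shift x) (h *: ecoord j) = F (x + h *: ecoord j) by rewrite /= addrC.
have := HF h. set d := F _ - F x. move=> Hd.
apply: le_trans (ler_norm _) _.
have hp : 0 < `|h| by rewrite normr_gt0.
rewrite normrZ normfV -(ler_pM2l hp) mulrA mulfV ?mul1r ?gt_eqF //.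
by rewrite mulrC.
Unshelve. all: end_near.
Qed.

Theorem lemma2 (R : realType) (p : nat) (f : 'rV[R]_p -> R)
  (g : 'I_p -> R -> \bar R) (L : 'I_p -> R) (bhat : 'rV[R]_p) :
  convex_fun f ->
  (forall x, differentiable f x) ->
  (forall j, 0 < L j) ->
  (forall (j : 'I_p) (x : 'rV[R]_p) (h : R),
     `|pderiv j f (x + h *: ecoord j) - pderiv j f x| <= L j * `|h|) ->
  (forall j, proper_fun (g j)) ->
  (forall j, lower_semicontinuous (g j)) ->
  (forall j, lower_bounded (g j)) ->
  (exists2 alpha : R, alpha < 1 &
     forall j, econvex1 (fun x => ((L j)^-1%:E * g j x + (alpha / 2 * x ^+ 2)%:E)%E)) ->
  (exists2 beta : nat -> 'rV[R]_p, pcd_run f g L beta & beta @ \oo --> bhat) ->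
  (forall j, fsubdiff (g j) (bhat 0 j) (- pderiv j f bhat)) ->
  (forall j, j \notin gsupp g bhat ->
     interior (fsubdiff (g j) (bhat 0 j)) (- pderiv j f bhat)) ->
  C3_near f bhat ->
  (forall j, j \in gsupp g bhat -> C3_near1 (g j) (bhat 0 j)) ->
  posdef (Mmat f g (gsupp g bhat) bhat) ->
  forall Q : 'M[R]_#|gsupp g bhat|,
    is_sqrtm Q (Mmat f g (gsupp g bhat) bhat) ->
  forall s : 'I_#|gsupp g bhat|,
    opnorm2 (Bmat g L bhat Q s) <= 1.
Proof.
move=> _ _ Lpos Lip _ _ _ _ _ _ _ [U [oU Ub] C3] _ [_ Mpd] Q [[QT _] QQ] s.
set S := gsupp g bhat.
set M := Mmat f g S bhat.
set j := enum_val s.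
set H := hess f bhat j j.
set d := d2 (g j) (bhat 0 j).
have HL : H <= L j.
  apply: hess_le; last exact: Lip.
  by case: (C3 bhat Ub j j j) => _ _ []...
have Mss : M s s = H + d by rewrite /M /Mmat mxE eqxx mul1r.
have Mpos : 0 < M s s.
  have := Mpd (delta_mx s 0).
  rewrite trmx_delta -rowE -colE !mxE; apply.
  apply/negP => /eqP/matrixP/(_ s 0); rewrite !mxE eqxx /= => /eqP.
  by rewrite mulr1n oner_eq0.
have Nq : \sum_i (col s Q) i 0 ^+ 2 = M s s.
  rewrite /M -/S -QQ mxE; apply: eq_bigr => i _.
  have := congr1 (fun A : 'M[R]_#|S| => A i s) QT; rewrite mxE => ->.
  by rewrite !mxE expr2.
have cE : (L j)^-1 / (1 + (L j)^-1 * d) = (L j + d)^-1.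
  have := Lpos j; move=> Lp.
  have Ld : 0 < L j + d by rewrite Mss in Mpos; lra.
  field; rewrite ?gt_eqF //; lra.
rewrite /opnorm2; apply: ge_sup.
  by exists (enorm (Bmat g L bhat Q s *m 0)), 0 => //=; rewrite /enorm big1 ?sqrtr0 // => i _; rewrite !mxE expr2 mul0r.
move=> _ [v /= Hv <-].
rewrite /Bmat -/j -/d cE Bv /enorm.
have CS := @cs_aux R _ (col s Q) v.
set q := col s Q in CS *.
set P := \sum_i q i 0 * v i 0 in CS *.
set c := (L j + d)^-1.
rewrite (eq_bigr (fun i => (c * P) ^+ 2 * q i 0 ^+ 2)); last by move=> i _; rewrite mxE exprMn.
rewrite -mulr_sumr Nq; rewrite Nq in CS.
move: Hv; rewrite /enorm -sqrtr1 !ler_sqrt // //.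
set V := \sum_i v i 0 ^+ 2 in CS *.
move=> HV.
set m := M s s in CS Mpos *.
have Ld : 0 < L j + d by rewrite /m Mss in Mpos; lra.
have c0 : 0 < c by rewrite /c invr_gt0.
have cm : c * m <= 1.
  by rewrite /c mulrC ler_pdivrMr // mul1r /m Mss lerD2r.
have V0 : 0 <= V by apply: sumr_ge0 => i _; exact: sqr_ge0.
have m0 : 0 <= m by exact: ltW.
have h1 : (c * P) ^+ 2 * m <= c ^+ 2 * (m ^+ 2 * V).
  by rewrite exprMn -mulrA ler_wpM2l // sqr_ge0.
apply: le_trans h1 _.
have h2 : m ^+ 2 * V <= m ^+ 2 by rewrite -{2}(mulr1 (m ^+ 2)) ler_wpM2l // sqr_ge0.
apply: le_trans (ler_wpM2l (sqr_ge0 c) h2) _.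
rewrite -exprMn -(expr1n _ 2) ler_pXn2r ?nnegrE //.
by apply: mulr_ge0; exact: ltW.
Qed.
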